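(* Let $K$ be a field, let $\mathscr C$ be a $K$-coalgebra with several objects, and let $\mathcal M$ be a right $\mathscr C$-comodule. Let $X\in Ob(\mathscr C)$ and $m\in\mathcal M(X)$. Then there exists a subobject $\mathcal N\subseteq\mathcal M$ in the category $Com^{\mathscr C}$ of right $\mathscr C$-comodules such that $m\in\mathcal N(X)$ and $\mathcal N(Y)$ is a finite dimensional $K$-vector space for every $Y\in Ob(\mathscr C)$.
   Context: A $K$-coalgebra with several objects $\mathscr C$ consists of a set $Ob(\mathscr C)$, a $K$-vector space $\mathscr C(X,Y)$ for all $X,Y\in Ob(\mathscr C)$, $K$-linear comultiplications $\delta_{XYZ}:\mathscr C(X,Z)\to\mathscr C(Y,Z)\otimes\mathscr C(X,Y)$, written $\delta_{XYZ}(f)=f_{Y1}\otimes f_{Y2}$ (summation suppressed), and counits $\epsilon_X:\mathscr C(X,X)\to K$, such that $(\delta_{YWZ}\otimes \mathrm{id})\circ\delta_{XYZ}=(\mathrm{id}\otimes\delta_{XYW})\circ\delta_{XWZ}$ as maps $\mathscr C(X,Z)\to\mathscr C(W,Z)\otimes\mathscr C(Y,W)\otimes\mathscr C(X,Y)$, and $(\epsilon_Y\otimes\mathrm{id})\circ\delta_{XYY}=\mathrm{id}=(\mathrm{id}\otimes\epsilon_X)\circ\delta_{XXY}$ on $\mathscr C(X,Y)$. Tensor products are over $K$. A right $\mathscr C$-comodule $\mathcal M$ consists of vector spaces $\mathcal M(X)$, $X\in Ob(\mathscr C)$, and linear coactions $\rho_{XY}:\mathcal M(X)\to\mathcal M(Y)\otimes\mathscr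 C(X,Y)$, written $\rho_{XY}(m)=m_{Y0}\otimes m_{Y1}$, such that $(\rho_{ZY}\otimes\mathrm{id}_{\mathscr C(X,Z)})\circ\rho_{XZ}=(\mathrm{id}_{\mathcal M(Y)}\otimes\delta_{XZY})\circ\rho_{XY}$ and $(\mathrm{id}\otimes\epsilon_X)\circ\rho_{XX}=\mathrm{id}$. A morphism $\phi:\mathcal M\to\mathcal N$ is a family of linear maps $\phi(X):\mathcal M(X)\to\mathcal N(X)$ with $\rho^{\mathcal N}_{XY}\circ\phi(X)=(\phi(Y)\otimes\mathrm{id})\circ\rho^{\mathcal M}_{XY}$; this gives the category $Com^{\mathscr C}$. A subobject $\mathcal N\subseteq\mathcal M$ means a family of subspaces $\mathcal N(Y)\subseteq\mathcal M(Y)$ with $\rho_{YZ}(\mathcal N(Y))\subseteq\mathcal N(Z)\otimes\mathscr C(Y,Z)$, so that $\mathcal N$ is a comodule with the restricted coactions. *)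

(* Defs.v *)
From HB Require Import structures.
From mathcomp Require Import all_boot all_order all_algebra.
Set Implicit Arguments. Unset Strict Implicit. Unset Printing Implicit Defensive.
Import Order.TTheory GRing.Theory Num.Theory.
Local Open Scope ring_scope.

(* An element of V (x) W is represented by a finite list of pairs
   [(v_1,w_1); ...; (v_n,w_n)] standing for sum_i v_i (x) w_i; similarly for
   triple tensors.  Two representatives denote the same tensor iff all
   functionals phi (x) psi (resp. phi (x) psi (x) chi), with phi, psi, chi
   linear forms, agree on them (over a field these functionals separate the
   points of the tensor product). *)

Section Tensors.
Variable K : fieldType.

Definition lin_form (V : lmodType K) (phi : V -> K) : Prop :=
  forall (a : K) (u v : V), phi (a *: u + v) = a * phi u + phi v.

Definition tensor2 (V W : lmodType K) := seq (V * W).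
Definition tensor3 (U V W : lmodType K) := seq (U * V * W).

Definition teq2 (V W : lmodType K) (t t' : tensor2 V W) : Prop :=
  forall (phi : V -> K) (psi : W -> K), lin_form phi -> lin_form psi ->
    \sum_(p <- t) phi p.1 * psi p.2 = \sum_(p <- t') phi p.1 * psi p.2.

Definition teq3 (U V W : lmodType K) (t t' : tensor3 U V W) : Prop :=
  forall (phi : U -> K) (psi : V -> K) (chi : W -> K),
    lin_form phi -> lin_form psi -> lin_form chi ->
    \sum_(p <- t) phi p.1.1 * psi p.1.2 * chi p.2
    = \sum_(p <- t') phi p.1.1 * psi p.1.2 * chi p.2.

Definition lin_to_tensor (V V' W : lmodType K) (f : V -> tensor2 V' W) : Prop :=
  forall (a : K) (u v : V),
    teq2 (f (a *: u + v)) ([seq (a *: p.1, p.2) | p <- f u] ++ f v).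

Definition is_coalgebra (Ob : Type) (C : Ob -> Ob -> lmodType K)
  (delta : forall X Y Z : Ob, C X Z -> tensor2 (C Y Z) (C X Y))
  (eps : forall X : Ob, C X X -> K) : Prop :=
  (forall X Y Z, lin_to_tensor (delta X Y Z)) /\
  (forall X, lin_form (eps X)) /\
  (* coassociativity: (delta_YWZ (x) id) o delta_XYZ = (id (x) delta_XYW) o delta_XWZ *)
  (forall X Y W Z (f : C X Z),
     teq3 (flatten [seq [seq (q.1, q.2, p.2) | q <- delta Y W Z p.1]
                   | p <- delta X Y Z f])
          (flatten [seq [seq (p.1, q.1, q.2) | q <- delta X Y W p.2]
                   | p <- delta X W Z f])) /\
  (forall X Y (f : C X Y),
     \sum_(p <- delta X Y Y f) eps Y p.1 *: p.2 = f) /\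
  (forall X Y (f : C X Y),
     \sum_(p <- delta X X Y f) eps X p.2 *: p.1 = f).

Definition is_right_comodule (Ob : Type) (C : Ob -> Ob -> lmodType K)
  (delta : forall X Y Z : Ob, C X Z -> tensor2 (C Y Z) (C X Y))
  (eps : forall X : Ob, C X X -> K)
  (M : Ob -> lmodType K) (rho : forall X Y : Ob, M X -> tensor2 (M Y) (C X Y))
  : Prop :=
  (forall X Y, lin_to_tensor (rho X Y)) /\
  (* (rho_ZY (x) id) o rho_XZ = (id (x) delta_XZY) o rho_XY *)
  (forall X Z Y (m : M X),
     teq3 (flatten [seq [seq (q.1, q.2, p.2) | q <- rho Z Y p.1]
                   | p <- rho X Z m])
          (flatten [seq [seq (p.1, q.1, q.2) | q <- delta X Z Y p.2]
                   | p <- rho X Y m])) /\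
  (forall X (m : M X), \sum_(p <- rho X X m) eps X p.2 *: p.1 = m).

Definition is_subspace (V : lmodType K) (N : V -> Prop) : Prop :=
  N 0 /\ forall (a : K) (u v : V), N u -> N v -> N (a *: u + v).

Definition is_subcomodule (Ob : Type) (C : Ob -> Ob -> lmodType K)
  (M : Ob -> lmodType K) (rho : forall X Y : Ob, M X -> tensor2 (M Y) (C X Y))
  (N : forall Y : Ob, M Y -> Prop) : Prop :=
  (forall Y, is_subspace (N Y)) /\
  (forall Y Z (m : M Y), N Y m ->
     exists t : tensor2 (M Z) (C Y Z),
       teq2 (rho Y Z m) t /\ (forall p, p \in t -> N Z p.1)).

Definition fin_dim_subspace (V : lmodType K) (N : V -> Prop) : Prop :=
  exists s : seq V, (forall x, x \in s -> N x) /\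
    forall v, N v -> exists c : 'I_(size s) -> K,
      v = \sum_(i < size s) c i *: s`_i.

End Tensors.

(* Main.v *)
Require Import Defs.
From HB Require Import structures.
From mathcomp Require Import all_boot all_order all_algebra.
From mathcomp Require Import ring.
From Stdlib Require Import ClassicalEpsilon Classical_Prop.
Set Implicit Arguments. Unset Strict Implicit. Unset Printing Implicit Defensive.
Import GRing.Theory.
Local Open Scope ring_scope.

Section Aux.
Variable K : fieldType.

Lemma lf0 (V : lmodType K) (phi : V -> K) : lin_form phi -> phi 0 = 0.
Proof.
move=> h; have := h 1 0 0; rewrite scale1r addr0 mul1r => e.
by apply: (@addrI _ (phi 0)); rewrite -e addr0.
Qed.

Lemma lfZ (V : lmodType K) (phi : V -> K) a u : lin_form phi -> phi (a *: u) = a * phi u.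
Proof. by move=> h; have := h a u 0; rewrite addr0 (lf0 h) addr0. Qed.

Lemma lfD (V : lmodType K) (phi : V -> K) u v : lin_form phi -> phi (u + v) = phi u + phi v.
Proof. by move=> h; have := h 1 u v; rewrite scale1r mul1r. Qed.

Lemma lf_sum (V : lmodType K) (phi : V -> K) I (s : seq I) (F : I -> V) :
  lin_form phi -> phi (\sum_(i <- s) F i) = \sum_(i <- s) phi (F i).
Proof.
move=> h; elim: s => [|x s IH]; first by rewrite !big_nil lf0.
by rewrite !big_cons lfD // IH.
Qed.

Lemma lf_sumZ (V : lmodType K) (phi : V -> K) I (s : seq I) (a : I -> K) (F : I -> V) :
  lin_form phi -> phi (\sum_(i <- s) a i *: F i) = \sum_(i <- s) a i * phi (F i).
Proof. by move=> h; rewrite lf_sum //; apply: eq_bigr => i _; rewrite lfZ. Qed.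

Lemma lf_comb (V : lmodType K) I (s : seq I) (a : I -> K) (f : I -> V -> K) :
  (forall i, lin_form (f i)) -> lin_form (fun x => \sum_(i <- s) a i * f i x).
Proof.
move=> h b u v; rewrite mulr_sumr -big_split /=; apply: eq_bigr => i _.
by rewrite h mulrDr !mulrA [a i * b]mulrC.
Qed.

Lemma lf_lin (V : lmodType K) (f g : V -> K) (a b : K) :
  lin_form f -> lin_form g -> lin_form (fun x => a * f x + b * g x).
Proof.
move=> hf hg c u v; rewrite hf hg; ring.
Qed.


Lemma lfB (V : lmodType K) (phi : V -> K) u v : lin_form phi -> phi (u - v) = phi u - phi v.
Proof.
move=> h; rewrite lfD // -scaleN1r lfZ //; by rewrite mulN1r.
Qed.

Lemma sum_delta n (a : nat -> K) j : (j < n)%N -> \sum_(k < n) a k * (j == k)%:R = a j.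
Proof.
move=> hj; rewrite (bigD1 (Ordinal hj)) //= eqxx mulr1 big1 ?addr0 // => k hk.
have -> : (j == k) = false by rewrite eq_sym -[j]/(val (Ordinal hj)) val_eqE (negbTE hk).
by rewrite mulr0.
Qed.

Lemma za (Z : zmodType) (x y A : Z) : x + A = (x - y) + (A + y).
Proof. by rewrite addrCA !addrA subrK addrC. Qed.

Lemma reduce (V W : lmodType K) (t : seq (V * W)) :
  exists (n : nat) (v : nat -> V) (w : nat -> W) (chi : nat -> W -> K),
   (forall i, lin_form (chi i)) /\
   (forall i j, (i < n)%N -> (j < n)%N -> chi i (w j) = (i == j)%:R) /\
   (forall g, lin_form g -> \sum_(p <- t) g p.2 *: p.1 = \sum_(j < n) g (w j) *: v j).
Proof.
elim: t => [|[m c] t [n [v [w [chi [Hl [Hd Hs]]]]]]].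
  exists 0%N, (fun _ => 0), (fun _ => 0), (fun _ _ => 0).
  split; first by move=> ? ? ? ?; rewrite mulr0 addr0.
  split; first by [].
  by move=> g _; rewrite big_nil big_ord0.
set e := fun j => chi j c.
set d := c - \sum_(j < n) e j *: w j.
have chid : forall j, (j < n)%N -> chi j d = 0.
  move=> j hj; rewrite /d lfB // lf_sumZ //.
  under eq_bigr do rewrite Hd //.
  by rewrite sum_delta // subrr.
have Hsum : forall g, lin_form g -> \sum_(p <- (m,c)::t) g p.2 *: p.1
    = g d *: m + \sum_(j < n) g (w j) *: (v j + e j *: m).
  move=> g hg; rewrite big_cons Hs //= /d lfB // lf_sumZ // scalerBl.
  under [X in _ = _ + X]eq_bigr do rewrite scalerDr scalerA.
  rewrite big_split /= -scaler_suml.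
  have -> : \sum_(i < n) g (w i) * e i = \sum_(i < n) e i * g (w i).
    by apply: eq_bigr => i _; rewrite mulrC.
  exact: za.
case: (classic (exists psi, lin_form psi /\ psi d <> 0)) => [[psi [hpsi hpd]] | hno]; last first.
  have gd : forall g, lin_form g -> g d = 0.
    by move=> g hg; apply: NNPP => h; apply: hno; exists g.
  exists n, (fun j => v j + e j *: m), w, chi.
  split => //; split => //.
  by move=> g hg; rewrite Hsum // gd // scale0r add0r.
have lfS : lin_form (fun x => \sum_(k < n) psi (w k) * chi k x).
  move=> a u u'; rewrite mulr_sumr -big_split /=; apply: eq_bigr => k _.
  by rewrite Hl mulrDr !mulrA [psi (w k) * a]mulrC.
exists n.+1, (fun j => if j is j'.+1 then v j' + e j' *: m else m),
  (fun j => if j is j'.+1 then w j' else d),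
  (fun j => if j is j'.+1 then chi j' else
     (fun x => (psi x - \sum_(k < n) psi (w k) * chi k x) / psi d)).
split.
  case=> [|i] //= a u u'.
  rewrite hpsi lfS; ring.
split.
  case=> [|i] [|j] //= hi hj.
  - rewrite big1 ?subr0 ?divff //; first by apply/eqP.
    by move=> k _; rewrite chid // mulr0.
  - under eq_bigr do rewrite Hd // eq_sym.
    by rewrite (sum_delta (fun k => psi (w k))) // subrr mul0r.
  - by rewrite chid.
  - by rewrite Hd.
move=> g hg; rewrite Hsum // big_ord_recl /=.
congr (_ + _); apply: eq_bigr => i _.
Qed.


Lemma sum_deltaV (V : lmodType K) n (f : nat -> V) b j : (j < n)%N ->
  \sum_(k < n) (if (k : nat) == j then b else 0) *: f k = b *: f j.
Proof.
move=> hj; rewrite (bigD1 (Ordinal hj)) //= eqxx big1 ?addr0 // => k hk.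
have -> : (val k == j) = false by rewrite -[j]/(val (Ordinal hj)) val_eqE (negbTE hk).
by rewrite scale0r.
Qed.

End Aux.

Theorem proposition2p4 (K : fieldType) (Ob : Type)
  (C : Ob -> Ob -> lmodType K)
  (delta : forall X Y Z : Ob, C X Z -> tensor2 (C Y Z) (C X Y))
  (eps : forall X : Ob, C X X -> K)
  (M : Ob -> lmodType K) (rho : forall X Y : Ob, M X -> tensor2 (M Y) (C X Y)) :
  is_coalgebra delta eps ->
  is_right_comodule delta eps rho ->
  forall (X : Ob) (m : M X),
  exists N : forall Y : Ob, M Y -> Prop,
    is_subcomodule rho N /\ N X m /\ (forall Y : Ob, fin_dim_subspace (N Y)).
Proof.
move=> [dlin [epslin [dcoass [cu1 cu2]]]] [rlin [rcoass rcu]] X m.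
have ex : forall Y, exists D : (nat * (nat -> M Y) * (nat -> C X Y) * (nat -> C X Y -> K))%type,
   let: (n, v, w, chi) := D in
   (forall i, lin_form (chi i)) /\
   (forall i j, (i < n)%N -> (j < n)%N -> chi i (w j) = (i == j)%:R) /\
   (forall g, lin_form g -> \sum_(p <- rho X Y m) g p.2 *: p.1 = \sum_(j < n) g (w j) *: v j).
  move=> Y; have [n [v [w [chi H]]]] := reduce (rho X Y m).
  by exists (n, v, w, chi).
pose D Y := proj1_sig (constructive_indefinite_description _ (ex Y)).
pose nn Y := (D Y).1.1.1.
pose vv Y := (D Y).1.1.2.
pose ww Y := (D Y).1.2.
pose cc Y := (D Y).2.
have HD : forall Y, (forall i, lin_form (cc Y i)) /\
   (forall i j, (i < nn Y)%N -> (j < nn Y)%N -> cc Y i (ww Y j) = (i == j)%:R) /\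
   (forall g, lin_form g -> \sum_(p <- rho X Y m) g p.2 *: p.1
       = \sum_(j < nn Y) g (ww Y j) *: vv Y j).
  move=> Y; rewrite /nn /vv /ww /cc /D.
  by case: (constructive_indefinite_description _ _) => [[[[n v] w] chi]] /=.
exists (fun Y x => exists a : nat -> K, x = \sum_(j < nn Y) a j *: vv Y j).
split; [split|split].
- move=> Y; split.
    by exists (fun _ => 0); rewrite big1 // => j _; rewrite scale0r.
  move=> a u u' [a1 ->] [a2 ->]; exists (fun j => a * a1 j + a2 j).
  rewrite scaler_sumr -big_split; apply: eq_bigr => j _.
  by rewrite scalerDl scalerA.
- move=> Y Z x [a ->].
  have [HlY [HdY HsY]] := HD Y; have [HlZ [HdZ HsZ]] := HD Z.
  pose chi := fun c : C X Y => \sum_(k < nn Y) a k * cc Y k c.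
  have lchi : lin_form chi.
    move=> b u u'; rewrite /chi mulr_sumr -big_split /=; apply: eq_bigr => k _.
    by rewrite HlY mulrDr !mulrA [a k * b]mulrC.
  have xE : \sum_(j < nn Y) a j *: vv Y j = \sum_(p <- rho X Y m) chi p.2 *: p.1.
    rewrite HsY //; apply: eq_bigr => j _; congr (_ *: _); rewrite /chi.
    under eq_bigr do rewrite HdY // eq_sym.
    by rewrite (sum_delta a).
  rewrite xE.
  exists (flatten [seq [seq (chi q.2 *: vv Z j, q.1) | q <- delta X Y Z (ww Z j)]
                  | j <- index_iota 0 (nn Z)]).
  split.
  + move=> phi psi hphi hpsi.
    pose Phi := fun y : M Y => \sum_(q <- rho Y Z y) phi q.1 * psi q.2.
    have lPhi : lin_form Phi.
      move=> b u u'; rewrite /Phi (rlin Y Z b u u' phi psi hphi hpsi) big_cat big_map /=.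
      rewrite mulr_sumr; congr (_ + _); apply: eq_bigr => q _; rewrite lfZ //; ring.
    pose Psi := fun c : C X Z => \sum_(q <- delta X Y Z c) psi q.1 * chi q.2.
    have lPsi : lin_form Psi.
      move=> b u u'; rewrite /Psi (dlin X Y Z b u u' psi chi hpsi lchi) big_cat big_map /=.
      rewrite mulr_sumr; congr (_ + _); apply: eq_bigr => q _; rewrite lfZ //; ring.
    have -> : \sum_(q <- rho Y Z (\sum_(p <- rho X Y m) chi p.2 *: p.1)) phi q.1 * psi q.2
       = Phi (\sum_(p <- rho X Y m) chi p.2 *: p.1) by [].
    rewrite lf_sumZ //.
    have co := rcoass X Y Z m phi psi chi hphi hpsi lchi.
    rewrite !big_flatten /= !big_map in co.
    transitivity (\sum_(p <- rho X Z m) phi p.1 * Psi p.2).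
      have -> : \sum_(p <- rho X Y m) chi p.2 * Phi p.1 =
         \sum_(p <- rho X Y m) \sum_(q <- rho Y Z p.1) phi q.1 * psi q.2 * chi p.2.
        by apply: eq_bigr => p _; rewrite mulrC /Phi mulr_suml.
      have -> : \sum_(p <- rho X Z m) phi p.1 * Psi p.2 =
         \sum_(p <- rho X Z m) \sum_(q <- delta X Y Z p.2) phi p.1 * psi q.1 * chi q.2.
        by apply: eq_bigr => p _; rewrite /Psi mulr_sumr; apply: eq_bigr => q _; rewrite mulrA.
      rewrite (eq_bigr (fun p => \sum_(q <- rho Y Z p.1) phi q.1 * psi q.2 * chi p.2)) in co; last by move=> p _; rewrite big_map.
      rewrite [X in _ = X](eq_bigr (fun p => \sum_(q <- delta X Y Z p.2) phi p.1 * psi q.1 * chi q.2)) in co; last by move=> p _; rewrite big_map.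
      exact: co.
    have -> : \sum_(p <- rho X Z m) phi p.1 * Psi p.2 = phi (\sum_(p <- rho X Z m) Psi p.2 *: p.1).
      by rewrite lf_sumZ //; apply: eq_bigr => p _; rewrite mulrC.
    rewrite HsZ // lf_sumZ // big_flatten /= big_map big_mkord.
    apply: eq_bigr => j _; rewrite big_map /Psi mulr_suml; apply: eq_bigr => q _ /=.
    rewrite lfZ //; ring.
  + move=> p /flattenP [s /mapP [j hj ->] /mapP [q _ ->]] /=.
    rewrite mem_index_iota in hj.
    exists (fun k => if k == j then chi q.2 else 0).
    by rewrite sum_deltaV.
- have [_ [_ HsX]] := HD X.
  by exists (fun j => eps X (ww X j)); rewrite -HsX // rcu.
- move=> Y; exists (mkseq (vv Y) (nn Y)); split.
    move=> x; rewrite /mkseq => /mapP [j hj ->].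
    rewrite mem_iota in hj.
    exists (fun k => if k == j then 1 else 0).
    by rewrite sum_deltaV ?scale1r.
  move=> v [a ->]; rewrite size_mkseq; exists (fun i => a i).
  by apply: eq_bigr => i _; rewrite nth_mkseq.
Qed.
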